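(* Let $X_1,X_2,\dots$ be independent Poisson random variables with $\mathbb{E}[X_i]=\lambda_i>0$ for $i\in\mathbb{N}$. Define $S_n=\sum_{i=1}^nX_i$, $\overline{\lambda}_n=\frac1n\sum_{i=1}^n\lambda_i$, and $\mathcal{V}(s,n)=n\overline{\lambda}_n(e^s-1)$ for $s\in\mathbb{R}$, $n\in\mathbb{N}$. Then for every positive integer $m$ and all $\theta\in(0,\infty)$, \[ \Pr\Big\{\sup_{n\in\mathbb{N}}\big[\zeta(S_n-m\theta)-\mathcal{V}(\zeta,n)+\mathcal{V}(\zeta,m)\big]\ge0\Big\}\le\Big[\exp\Big(\theta-\overline{\lambda}_m+\theta\ln\frac{\overline{\lambda}_m}{\theta}\Big)\Big]^m, \] where $\zeta=\ln\frac{\theta}{\overline{\lambda}_m}$.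
   Context: $\mathbb{N}$ denotes the set of positive integers. *)

(* Defs.v *)
From HB Require Import structures.
From mathcomp Require Import all_boot all_order all_algebra.
From mathcomp Require Import all_classical all_reals all_analysis.
From mathcomp Require Import poisson_distribution.
Set Implicit Arguments. Unset Strict Implicit. Unset Printing Implicit Defensive.
Import Order.TTheory GRing.Theory Num.Theory.
Local Open Scope classical_set_scope.
Local Open Scope ring_scope.

Definition is_poisson {R : realType} (d : measure_display) (T : measurableType d)
  (P : probability T R) (X : {RV P >-> R}) (lam : R) : Prop :=
  forall k : nat, P (X @^-1` [set k%:R]) = (poisson_pmf lam k)%:E.

Definition mutually_independent {R : realType} (d : measure_display)
  (T : measurableType d) (P : probability T R) (X : nat -> {RV P >-> R}) : Prop :=
  forall (J : set nat) (B : nat -> set R), finite_set J ->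
    (forall i, J i -> measurable (B i)) ->
    P (\bigcap_(i in J) (X i @^-1` B i)) =
    \big[*%E/1%E]_(i \in J) P (X i @^-1` B i).

(* Indices are shifted: X i, lam i stand for X_{i+1}, lambda_{i+1}. *)
Definition partial_sum {R : realType} {T : Type} (X : nat -> T -> R) (n : nat) (w : T) : R :=
  \sum_(i < n) X i w.

Definition lambar {R : realType} (lam : nat -> R) (n : nat) : R :=
  (\sum_(i < n) lam i) / n%:R.

Definition Vfun {R : realType} (lam : nat -> R) (s : R) (n : nat) : R :=
  n%:R * lambar lam n * (expR s - 1).

(* Main.v *)
Require Import Defs.
From HB Require Import structures.
From mathcomp Require Import all_boot all_order all_algebra.
From mathcomp Require Import all_classical all_reals all_analysis.
From mathcomp Require Import poisson_distribution.
From mathcomp Require Import ring lra.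
From mathcomp Require Import measurable_realfun.
Import Order.TTheory GRing.Theory Num.Theory.
Local Open Scope classical_set_scope.
Local Open Scope ring_scope.
Section mgf.
Context (R : realType).

Lemma pois_mgf (r c : R) : 0 < r -> 0 <= c ->
  (\sum_(k <oo) (poisson_pmf r k * c ^+ k)%:E = (expR (r * c - r))%:E)%E.
Proof.
move=> r0 c0.
have -> : r * c - r = - r + r * c by ring.
rewrite expRD EFinM.
under eq_eseriesr.
  move=> n _.
  rewrite (_ : poisson_pmf r n * c ^+ n = expR (- r) * ((r * c) ^+ n * n`!%:R^-1)); last first.
    by rewrite /poisson_pmf r0 exprMn; ring.
  rewrite EFinM; over.
rewrite /= nneseriesZl/=; last first.
  by move=> n _; rewrite lee_fin divr_ge0// exprn_ge0// mulr_ge0// ltW.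
congr (_ * _)%E; rewrite expRE -EFin_lim; last first.
  rewrite /pseries/=; under eq_fun do rewrite mulrC.
  exact: is_cvg_series_exp_coeff.
apply/congr_lim/funext => n/=; rewrite /pseries/= /series/= -sumEFin//.
by under eq_bigr do rewrite mulrC.
Qed.

End mgf.
Section process.
Context (R : realType) (d : measure_display) (T : measurableType d)
  (P : probability T R) (X : nat -> {RV P >-> R}) (lam : nat -> R) (zeta : R).

Definition Z i (w : T) : R := zeta * X i w - lam i * (expR zeta - 1).
Definition SZ j n (w : T) : R := \sum_(j <= i < j + n.+1) Z i w.
Definition ev j a N : set T := [set w | exists2 n, (n < N)%N & a <= SZ j n w].
Definition Hset (J : set nat) (B : nat -> set R) : set T :=
  \bigcap_(i in J) (X i @^-1` B i).

Lemma mX i Y : measurable Y -> measurable (X i @^-1` Y).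
Proof. by move=> mY; rewrite -(setTI (X i @^-1` Y)); exact: measurable_funPT. Qed.

Lemma mZ i : measurable_fun setT (Z i).
Proof.
rewrite /Z; apply: measurable_realfun.measurable_funB.
  apply: measurable_realfun.measurable_funM; first exact: measurable_cst.
  exact: measurable_funPT.
exact: measurable_cst.
Qed.

Lemma mSZ j n : measurable_fun setT (SZ j n).
Proof. by rewrite /SZ; apply: measurable_sum => i; exact: mZ. Qed.

Lemma mev j a N : measurable (ev j a N).
Proof.
rewrite (_ : ev j a N = \bigcup_(n in [set n | (n < N)%N]) (SZ j n @^-1` `[a, +oo[)).
  apply: bigcup_measurable => n _.
  by rewrite -(setTI (SZ j n @^-1` _)); apply: mSZ => //; exact: measurable_itv.
apply/seteqP; split => w /=.
  by case=> n nN h; exists n => //=; rewrite in_itv/= andbT.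
by case=> n /= nN; rewrite in_itv/= andbT => h; exists n.
Qed.

Lemma ev0 j a : ev j a 0 = set0.
Proof. by apply/seteqP; split => w // [n]. Qed.

Lemma SZ0 j w : SZ j 0 w = Z j w.
Proof. by rewrite /SZ addn1 big_nat1. Qed.

Lemma SZS j n w : SZ j n.+1 w = Z j w + SZ j.+1 n w.
Proof.
rewrite /SZ big_ltn; last by rewrite addnS ltnS leq_addr.
by rewrite addSnnS.
Qed.

Lemma evS j a N w : ev j a N.+1 w <-> (a <= Z j w \/ ev j.+1 (a - Z j w) N w).
Proof.
split.
  case=> -[|n] nN h; first by left; rewrite -SZ0.
  right; exists n => //.
  by rewrite lerBlDl -SZS.
case=> [h|[n nN h]]; first by exists 0%N => //; rewrite SZ0.
by exists n.+1 => //; rewrite SZS -lerBlDl.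
Qed.

Lemma ev_mono j a : {homo ev j a : n m / (n <= m)%N >-> (n <= m)%O}.
Proof.
move=> n m nm; apply/subsetPset => w [k kn h]; exists k => //.
exact: leq_trans kn nm.
Qed.

Lemma mHset J B : finite_set J -> (forall i, J i -> measurable (B i)) ->
  measurable (Hset J B).
Proof.
move=> _ mB; have [->|J0] := eqVneq J set0.
  by rewrite /Hset bigcap_set0.
apply: bigcap_measurable; first exact/set0P.
by move=> i Ji; apply: mX; exact: mB.
Qed.

End process.
Arguments Z {R d T P} X lam zeta i w.
Arguments SZ {R d T P} X lam zeta j n w.
Arguments ev {R d T P} X lam zeta j a N.
Arguments Hset {R d T P} X J B.
Arguments mHset {R d T P X J B}.
Arguments mev {R d T P} X lam zeta j a N.
Arguments ev_mono {R d T P} X lam zeta j a.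
Section indep.
Context (R : realType) (d : measure_display) (T : measurableType d)
  (P : probability T R) (X : nat -> {RV P >-> R}) (lam : nat -> R).
Hypothesis indep : mutually_independent X.
Hypothesis lam_gt0 : forall i, 0 < lam i.
Hypothesis pois : forall i, is_poisson (X i) (lam i).

Local Notation C j k := (X j @^-1` [set (k%:R : R)]).

Lemma mC j (k : nat) : measurable (C j k).
Proof. apply: mX; exact: measurable_set1. Qed.

Lemma mrange : measurable (range (fun k : nat => k%:R : R)).
Proof.
rewrite (_ : range _ = \bigcup_k [set (k%:R : R)]).
  by apply: bigcup_measurable => k _; exact: measurable_set1.
apply/seteqP; split => x /=; first by case=> k _ <-; exists k.
by case=> k _ /= ->; exists k.
Qed.

Lemma nat_as j : P (X j @^-1` (~` range (fun k : nat => k%:R : R))) = 0%E.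
Proof.
set D := X j @^-1` _.
have mD : measurable D by apply: mX; apply: measurableC; exact: mrange.
have mU : measurable (\bigcup_k C j k) by apply: bigcup_measurable => k _; exact: mC.
have h1 : P (\bigcup_k C j k) = 1%E.
  rewrite measure_semi_bigcup//=; last first.
    move=> k l _ _ [w [/= h1 h2]]; move: h1; rewrite h2 => /eqP.
    by rewrite eqr_nat => /eqP.
  rewrite (eq_eseriesr (fun k _ => pois j k)).
  have := @pois_mgf R (lam j) 1 (lam_gt0 j) ler01.
  rewrite mulr1 subrr expR0 => <-.
  by apply: eq_eseriesr => k _; rewrite expr1n mulr1.
have h2 : P (D `|` \bigcup_k C j k) = 1%E.
  rewrite (_ : _ `|` _ = setT) ?probability_setT//.
  apply/seteqP; split => // w _.
  have [[k _ hk]|nr] := pselect (range (fun k : nat => k%:R : R) (X j w)).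
    by right; exists k.
  by left.
move: h2; rewrite measureU//; last first.
  apply/seteqP; split => // w [/= hD [k _ /= hk]]; apply: hD; exists k => //.
rewrite [X in _ + X](_ : _ = 1%E); last exact: h1.
move=> h.
have fD := fin_num_measure P _ mD.
have h' : fine (P D) + 1 = 1 by apply: EFin_inj; rewrite EFinD fineK.
by rewrite -(fineK fD); congr EFin; lra.
Qed.

Lemma decomp j S : measurable S ->
  (P S <= \sum_(k <oo) P (S `&` C j k))%E.
Proof.
move=> mS.
set D := X j @^-1` (~` range (fun k : nat => k%:R : R)).
have mD : measurable D by apply: mX; apply: measurableC; exact: mrange.
have mF k : measurable (S `&` C j k) by apply: measurableI => //; exact: mC.
have mU : measurable (\bigcup_k (S `&` C j k)) by apply: bigcup_measurable.
have hS : S `<=` (S `&` D) `|` \bigcup_k (S `&` C j k).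
  move=> w Sw.
  have [[k _ hk]|nr] := pselect (range (fun k : nat => k%:R : R) (X j w)).
    by right; exists k => //; split.
  by left; split.
apply: (le_trans (le_measure _ _ _ hS)); rewrite ?inE//.
  by apply: measurableU => //; exact: measurableI.
apply: (le_trans (measureU2 _ _ _)) => //; first exact: measurableI.
rewrite [X in (X + _)%E](_ : _ = 0%E) ?add0e.
  exact: measure_sigma_subadditive.
apply/eqP; rewrite eq_le measure_ge0 andbT -(nat_as j).
by apply: le_measure; rewrite ?inE//; exact: measurableI.
Qed.

Definition Bk j k (B : nat -> set R) i := if i == j then [set (k%:R : R)] else B i.

Lemma Hset_step j k J B : (forall i, J i -> (i < j)%N) ->
  Hset X (j |` J) (Bk j k B) = C j k `&` Hset X J B.
Proof.
move=> hJ; rewrite /Hset bigcap_setU1 /Bk eqxx; congr (_ `&` _).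
apply: eq_bigcapr => i Ji.
by have /negbTE -> : i != j by rewrite neq_ltn hJ.
Qed.

Lemma P_step j k J B : finite_set J -> (forall i, J i -> (i < j)%N) ->
  (forall i, J i -> measurable (B i)) ->
  P (Hset X (j |` J) (Bk j k B)) = ((poisson_pmf (lam j) k)%:E * P (Hset X J B))%E.
Proof.
move=> fJ hJ mB; rewrite /Hset indep; last 2 first.
- by rewrite finite_setU; split => //; exact: finite_set1.
- move=> i [->|Ji]; rewrite /Bk; first by rewrite eqxx; exact: measurable_set1.
  by case: eqP => _; [exact: measurable_set1|exact: mB].
rewrite fsbigU0//; last by move=> i [/= -> /hJ]; rewrite ltnn.
rewrite fsbig_set1 /Bk eqxx pois; congr (_ * _)%E.
rewrite indep//; apply: eq_fsbigr => i /set_mem Ji.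
by have /negbTE -> : i != j by rewrite neq_ltn hJ.
Qed.

End indep.
Arguments Bk {R} j k B i.
Arguments P_step {R d T P X lam} indep pois j k {J B}.
Arguments Hset_step {R d T P} X j k {J} B.
Arguments decomp {R d T P X lam} lam_gt0 pois j {S}.
Arguments mC {R d T P} X j k.
Section mainlemma.
Context (R : realType) (d : measure_display) (T : measurableType d)
  (P : probability T R) (X : nat -> {RV P >-> R}) (lam : nat -> R) (zeta : R).
Hypothesis indep : mutually_independent X.
Hypothesis lam_gt0 : forall i, 0 < lam i.
Hypothesis pois : forall i, is_poisson (X i) (lam i).

Lemma main_ineq N : forall j a (J : set nat) (B : nat -> set R), finite_set J ->
  (forall i, J i -> (i < j)%N) -> (forall i, J i -> measurable (B i)) ->
  (P (Hset X J B `&` ev X lam zeta j a N) <= P (Hset X J B) * (expR (- a))%:E)%E.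
Proof.
elim: N => [|N IH] j a J B fJ hJ mB.
  by rewrite ev0 setI0 measure0 mule_ge0// lee_fin expR_ge0.
set A := Hset X J B.
have mA : measurable A := mHset fJ mB.
have mE : measurable (ev X lam zeta j a N.+1) := mev X lam zeta j a N.+1.
set c := expR zeta.
pose z (k : nat) := zeta * k%:R - lam j * (c - 1).
have mBk k : forall i, (j |` J) i -> measurable (Bk j k B i).
  move=> i [->|Ji]; rewrite /Bk; first by rewrite eqxx; exact: measurable_set1.
  by case: eqP => _; [exact: measurable_set1|exact: mB].
have fJ' : finite_set (j |` J) by rewrite finite_setU; split => //; exact: finite_set1.
have key k : (P (A `&` ev X lam zeta j a N.+1 `&` X j @^-1` [set k%:R])
    <= P A * (poisson_pmf (lam j) k * expR (z k - a))%:E)%E.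
  have hstep := P_step indep pois j k fJ hJ mB.
  have hset := Hset_step X j k B hJ.
  have mH : measurable (Hset X (j |` J) (Bk j k B)) := mHset fJ' (mBk k).
  have [hz|hz] := leP a (z k).
    apply: (@le_trans _ _ (P (Hset X (j |` J) (Bk j k B)))).
      apply: le_measure; rewrite ?inE//.
        by apply: measurableI; [exact: measurableI|exact: mC].
      by rewrite hset => w [[Aw _] Cw]; split.
    rewrite hstep muleC; apply: lee_wpmul2l => //.
    rewrite lee_fin ler_peMr ?poisson_pmf_ge0//.
    by rewrite -expR0 ler_expR subr_ge0.
  apply: (@le_trans _ _ (P (Hset X (j |` J) (Bk j k B)
      `&` ev X lam zeta j.+1 (a - z k) N))).
    apply: le_measure; rewrite ?inE//.
        by apply: measurableI; [exact: measurableI|exact: mC].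
      by apply: measurableI => //; exact: mev.
    move=> w [[Aw Ew] Cw]; split; first by rewrite hset; split.
    have Zw : Z X lam zeta j w = z k by rewrite /Z /z Cw.
    by move/evS: Ew; rewrite Zw => -[/(lt_le_trans hz)|//]; rewrite ltxx.
  apply: le_trans; first apply: IH => //.
    by move=> i [->|/hJ Ji] //; exact: ltnW.
  exact: mBk.
  rewrite hstep opprB EFinM muleA [(P A * _)%E]muleC.
  by [].
apply: le_trans; first exact: (decomp lam_gt0 pois j (measurableI _ _ mA mE)).
apply: le_trans.
  apply: lee_nneseries => [k _ _|k _]; first exact: measure_ge0.
  exact: key.
rewrite -(fineK (fin_num_measure P _ mA)) nneseriesZl; last first.
  by move=> k _; rewrite lee_fin mulr_ge0 ?poisson_pmf_ge0 ?expR_ge0.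
apply: lee_wpmul2l; first by rewrite fineK ?measure_ge0//; exact: fin_num_measure.
have hc : 0 < c by exact: expR_gt0.
under eq_eseriesr.
  move=> k _.
  rewrite (_ : poisson_pmf (lam j) k * expR (z k - a) =
    expR (- a - lam j * (c - 1)) * (poisson_pmf (lam j) k * c ^+ k)); last first.
    rewrite /z -expRM_natr.
    rewrite (_ : zeta * k%:R - lam j * (c - 1) - a = (- a - lam j * (c - 1)) + zeta * k%:R); last by ring.
    by rewrite expRD; ring.
  rewrite EFinM; over.
rewrite /= nneseriesZl; last first.
  by move=> k _; rewrite lee_fin mulr_ge0 ?poisson_pmf_ge0// exprn_ge0// ltW.
rewrite (@pois_mgf R (lam j) c (lam_gt0 j) (ltW hc)) -EFinM -expRD lee_fin.
have -> : - a - lam j * (c - 1) + (lam j * c - lam j) = - a by ring.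
by [].
Qed.

End mainlemma.
Lemma ev_bound (R : realType) (d : measure_display) (T : measurableType d)
  (P : probability T R) (X : nat -> {RV P >-> R}) (lam : nat -> R) (zeta : R) :
  mutually_independent X -> (forall i, 0 < lam i) ->
  (forall i, is_poisson (X i) (lam i)) ->
  forall a N, (P (ev X lam zeta 0 a N) <= (expR (- a))%:E)%E.
Proof.
move=> indep lam_gt0 pois a N.
have := @main_ineq R d T P X lam zeta indep lam_gt0 pois N 0%N a set0 (fun _ => setT).
rewrite /Hset bigcap_set0 setTI probability_setT mul1e; apply => //.
Qed.

Theorem theorem18 (R : realType) (d : measure_display) (T : measurableType d)
  (P : probability T R) (X : nat -> {RV P >-> R}) (lam : nat -> R) :
  mutually_independent X ->
  (forall i, 0 < lam i) ->
  (forall i, is_poisson (X i) (lam i)) ->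
  forall (m : nat) (theta : R), (0 < m)%N -> 0 < theta ->
  let zeta := ln (theta / lambar lam m) in
  (P [set w | (0 <= ereal_sup
        [set ((zeta * (partial_sum (fun i => X i : T -> R) n w - m%:R * theta)
               - Vfun lam zeta n + Vfun lam zeta m)%:E) | n in [set n | (0 < n)%N]])%E]
   <= ((expR (theta - lambar lam m + theta * ln (lambar lam m / theta))) ^+ m)%:E)%E.
Proof.
move=> indep lam_gt0 pois m theta m0 th0; cbv zeta.
set zeta := ln (theta / lambar lam m).
have lb0 : 0 < lambar lam m.
  rewrite /lambar divr_gt0 ?ltr0n//.
  case: m m0 {zeta} => // m' _.
  rewrite big_ord_recl.
  have h1 := lam_gt0 0%N.
  have h2 : 0 <= \sum_(i < m') lam (bump 0 i) by apply: sumr_ge0 => i _; exact: ltW.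
  by rewrite /bump/=; lra.
pose a0 := zeta * (m%:R * theta) - Vfun lam zeta m.
pose Y n w := zeta * (partial_sum (fun i => X i : T -> R) n w - m%:R * theta)
               - Vfun lam zeta n + Vfun lam zeta m.
have hY n w : (0 < n)%N -> Y n w = SZ X lam zeta 0 n.-1 w - a0.
  move=> n0; rewrite /Y /SZ /a0 add0n prednK// big_mkord /Z big_split /= sumrN.
  rewrite -mulr_sumr -mulr_suml /partial_sum /Vfun /lambar.
  have : n%:R != 0 :> R by rewrite pnatr_eq0 -lt0n.
  by move=> nz; rewrite [n%:R * _]mulrCA divff // mulr1; ring.
pose E := [set w | (0 <= ereal_sup [set (Y n w)%:E | n in [set n | (0 < n)%N]])%E].
change (P E <= ((expR (theta - lambar lam m + theta * ln (lambar lam m / theta))) ^+ m)%:E)%E.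
have mY n : measurable_fun setT (Y n).
  rewrite /Y /partial_sum; apply: measurable_realfun.measurable_funD; last exact: measurable_cst.
  apply: measurable_realfun.measurable_funB; last exact: measurable_cst.
  apply: measurable_realfun.measurable_funM; first exact: measurable_cst.
  apply: measurable_realfun.measurable_funB; last exact: measurable_cst.
  by apply: measurable_sum => i; exact: measurable_funPT.
have mE : measurable E.
  have mf : forall n, measurable_fun setT (EFin \o Y n).
    by move=> n; apply/(measurable_realfun.measurable_EFinP setT (Y n)).
  have mg := measurable_realfun.measurable_fun_esups mf 1%N.
  have := mg measurableT _ (measurable_realfun.emeasurable_itv `[0%E, +oo[).
  rewrite setTI; set S := (_ @^-1` _); suff -> : E = S by [].
  by apply/seteqP; split => w /=; rewrite /S /= in_itv/= andbT.
have bound eps : 0 < eps -> (P E <= (expR (- (a0 - eps)))%:E)%E.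
  move=> e0.
  pose U := \bigcup_N ev X lam zeta 0 (a0 - eps) N.
  have EU : E `<=` U.
    move=> w Ew.
    have : ((- eps)%:E < ereal_sup [set (Y n w)%:E | n in [set n | (0 < n)%N]])%E.
      by apply: lt_le_trans Ew; rewrite lte_fin oppr_lt0.
    case/ereal_sup_gt => _ [n /= n0 <-]; rewrite lte_fin (hY _ _ n0) => h.
    exists n => //; exists n.-1; first by rewrite prednK.
    lra.
  have mev' N : measurable (ev X lam zeta 0 (a0 - eps) N) := mev X lam zeta 0 (a0 - eps) N.
  have mU : measurable U by apply: bigcup_measurable => N _.
  apply: (le_trans (le_measure _ _ _ EU)); rewrite ?inE //.
  have hc := @nondecreasing_cvg_mu _ _ R P _ mev' mU (ev_mono X lam zeta 0 (a0 - eps)).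
  apply: (@le_trans _ _ (lim ((P \o ev X lam zeta 0 (a0 - eps)) x @[x --> \oo]))).
    by rewrite le_eqVlt; apply/orP; left; apply/eqP; symmetry; exact: (cvg_lim (@ereal_hausdorff R) hc).
  apply: lime_le; first by apply/cvg_ex; eexists; exact: hc.
  by apply: nearW => N /=; exact: ev_bound.
have ez : expR zeta = theta / lambar lam m by rewrite /zeta lnK// posrE divr_gt0.
have lz : ln (lambar lam m / theta) = - zeta.
  by rewrite /zeta -invf_div lnV// posrE divr_gt0.
have -> : expR (theta - lambar lam m + theta * ln (lambar lam m / theta)) ^+ m
    = expR (- a0).
  rewrite -expRM_natl; congr expR.
  rewrite lz /a0 /Vfun ez /lambar.
  have : m%:R != 0 :> R by rewrite pnatr_eq0 -lt0n.
  have : lambar lam m != 0 by rewrite gt_eqF.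
  rewrite /lambar => h1 h2; field.
  rewrite h2 /=; apply: contraNneq h1 => ->; by rewrite mul0r.
apply/(@lee_addgt0Pr R) => delta d0.
have B0 : 0 < expR (- a0) by exact: expR_gt0.
have hd : 0 < delta / expR (- a0) by exact: divr_gt0.
have h1 : 1 < 1 + delta / expR (- a0) by rewrite ltrDl.
have := bound (ln (1 + delta / expR (- a0))) (ln_gt0 h1).
rewrite opprB addrC expRD lnK; last by rewrite posrE (lt_trans ltr01 h1).
rewrite mulrDr mulr1 mulrCA divff ?gt_eqF// mulr1 EFinD.
by [].
Qed.
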